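(* A $\mathsf V$-functor $m:M\to X$ is L-dense if, and only if, for all $\mathsf V$-functors $f,g:X\to Y$ with $f\cdot m=g\cdot m$ one has $f\cong g$.
   Context: Let $\mathsf V=(\mathsf V,\otimes,k)$ be a commutative unital quantale (complete lattice with commutative associative $\otimes$ having neutral element $k$, with $u\otimes(-)$ preserving suprema). A $\mathsf V$-category $(X,a)$ is a set with $a:X\times X\to\mathsf V$ such that $k\le a(x,x)$ and $a(x,y)\otimes a(y,z)\le a(x,z)$; a $\mathsf V$-functor $f:(X,a)\to(Y,b)$ satisfies $a(x,y)\le b(f(x),f(y))$. For $\mathsf V$-functors $f,g:X\to(Y,b)$, $f\cong g$ means $k\le b(f(x),g(x))$ and $k\le b(g(x),f(x))$ for all $x\in X$. A $\mathsf V$-functor $m:(M,c)\to(X,a)$ is L-dense if $a(x,x')=\bigvee_{z\in M}a(x,m(z))\otimes a(m(z),x')$ for all $x,x'\in X$. *)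

(* Defs.v *)
Set Implicit Arguments.

Record Quantale := {
  qcar :> Type;
  qle : qcar -> qcar -> Prop;
  qle_refl : forall u, qle u u;
  qle_trans : forall u v w, qle u v -> qle v w -> qle u w;
  qle_antisym : forall u v, qle u v -> qle v u -> u = v;
  qsup : (qcar -> Prop) -> qcar;
  qsup_ub : forall (S : qcar -> Prop) u, S u -> qle u (qsup S);
  qsup_least : forall (S : qcar -> Prop) w,
      (forall u, S u -> qle u w) -> qle (qsup S) w;
  qten : qcar -> qcar -> qcar;
  qk : qcar;
  qten_assoc : forall u v w, qten u (qten v w) = qten (qten u v) w;
  qten_comm : forall u v, qten u v = qten v u;
  qten_k : forall u, qten qk u = u;
  qten_sup : forall u (S : qcar -> Prop),
      qten u (qsup S) = qsup (fun w => exists s, S s /\ w = qten u s)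
}.

Arguments qle {q}.
Arguments qsup {q}.
Arguments qten {q}.
Arguments qk {q}.

Record VCat (V : Quantale) := {
  vobj :> Type;
  vhom : vobj -> vobj -> V;
  vhom_refl : forall x, qle qk (vhom x x);
  vhom_trans : forall x y z, qle (qten (vhom x y) (vhom y z)) (vhom x z)
}.

Arguments vhom {V v}.

Definition is_Vfunctor {V : Quantale} {X Y : VCat V} (f : X -> Y) : Prop :=
  forall x y, qle (vhom x y) (vhom (f x) (f y)).

Definition Viso {V : Quantale} {X Y : VCat V} (f g : X -> Y) : Prop :=
  forall x, qle qk (vhom (f x) (g x)) /\ qle qk (vhom (g x) (f x)).

Definition L_dense {V : Quantale} {M X : VCat V} (m : M -> X) : Prop :=
  forall x x' : X,
    vhom x x' = qsup (fun w => exists z : M, w = qten (vhom x (m z)) (vhom (m z) x')).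

(* Main.v *)
Require Import Defs.
From Stdlib Require Import ClassicalEpsilon Bool.

Lemma ten_mono_r (V : Quantale) (u v v' : V) : qle v v' -> qle (qten u v) (qten u v').
Proof.
  intro H.
  assert (Hs : qsup (fun s => s = v \/ s = v') = v').
  { apply qle_antisym.
    - apply qsup_least. intros s [->| ->]; [exact H| apply qle_refl].
    - apply qsup_ub. now right. }
  rewrite <- Hs. rewrite qten_sup. apply qsup_ub. exists v. split; auto.
Qed.

Lemma ten_mono_l (V : Quantale) (u u' v : V) : qle u u' -> qle (qten u v) (qten u' v).
Proof. intro H. rewrite (qten_comm _ u), (qten_comm _ u'). now apply ten_mono_r. Qed.

Lemma ten_mono (V : Quantale) (u u' v v' : V) : qle u u' -> qle v v' -> qle (qten u v) (qten u' v').
Proof. intros; eapply qle_trans; [apply ten_mono_l; eauto| apply ten_mono_r; eauto]. Qed.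

Lemma sup_ten_r (V : Quantale) (t w : V) (S : V -> Prop) :
  (forall s, S s -> qle (qten t s) w) -> qle (qten t (qsup S)) w.
Proof. intro H. rewrite qten_sup. apply qsup_least. intros u [s [Ss ->]]. auto. Qed.

Lemma sup_ten_l (V : Quantale) (t w : V) (S : V -> Prop) :
  (forall s, S s -> qle (qten s t) w) -> qle (qten (qsup S) t) w.
Proof. intro H. rewrite qten_comm. apply sup_ten_r. intros s Ss. rewrite qten_comm. auto. Qed.

Definition dd {V : Quantale} {M X : VCat V} (m : M -> X) (x x' : X) : V :=
  qsup (fun w => exists z : M, w = qten (vhom x (m z)) (vhom (m z) x')).

Lemma dd_ub {V : Quantale} {M X : VCat V} (m : M -> X) x x' z :
  qle (qten (vhom x (m z)) (vhom (m z) x')) (dd m x x').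
Proof. apply qsup_ub. eauto. Qed.

Lemma ad_le {V : Quantale} {M X : VCat V} (m : M -> X) x y w :
  qle (qten (vhom x y) (dd m y w)) (dd m x w).
Proof.
  apply sup_ten_r. intros s [z ->]. rewrite qten_assoc.
  eapply qle_trans; [|apply (dd_ub m x w z)]. apply ten_mono_l. apply vhom_trans.
Qed.

Lemma da_le {V : Quantale} {M X : VCat V} (m : M -> X) x y w :
  qle (qten (dd m x y) (vhom y w)) (dd m x w).
Proof.
  apply sup_ten_l. intros s [z ->]. rewrite <- qten_assoc.
  eapply qle_trans; [|apply (dd_ub m x w z)]. apply ten_mono_r. apply vhom_trans.
Qed.

Lemma dd_le_a {V : Quantale} {M X : VCat V} (m : M -> X) x w :
  qle (dd m x w) (vhom x w).
Proof. apply qsup_least. intros s [z ->]. apply vhom_trans. Qed.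

Lemma dd_dd {V : Quantale} {M X : VCat V} (m : M -> X) x y w :
  qle (qten (dd m x y) (dd m y w)) (vhom x w).
Proof.
  eapply qle_trans; [apply ten_mono; apply dd_le_a|]. apply vhom_trans.
Qed.

Definition bY {V : Quantale} {M X : VCat V} (m : M -> X) (p q : X * bool) : V :=
  if Bool.eqb (snd p) (snd q) then vhom (fst p) (fst q) else dd m (fst p) (fst q).

Lemma bY_refl {V : Quantale} {M X : VCat V} (m : M -> X) p : qle qk (bY m p p).
Proof. unfold bY. rewrite eqb_reflx. apply vhom_refl. Qed.

Lemma bY_trans {V : Quantale} {M X : VCat V} (m : M -> X) p q r :
  qle (qten (bY m p q) (bY m q r)) (bY m p r).
Proof.
  destruct p as [x i], q as [y j], r as [w l]; unfold bY; simpl.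
  destruct i, j, l; simpl;
    first [apply vhom_trans | apply ad_le | apply da_le | apply dd_dd].
Qed.

Definition YCat {V : Quantale} {M X : VCat V} (m : M -> X) : VCat V :=
  {| vobj := X * bool; vhom := bY m; vhom_refl := bY_refl m; vhom_trans := bY_trans m |}.

Theorem mainTheorem5 (V : Quantale) (M X : VCat V) (m : M -> X) :
  is_Vfunctor m ->
  (L_dense m <->
   (forall (Y : VCat V) (f g : X -> Y),
      is_Vfunctor f -> is_Vfunctor g ->
      (forall z : M, f (m z) = g (m z)) ->
      Viso f g)).
Proof.
  intros Hm. split.
  - intros HL Y f g Hf Hg Hfg x.
    assert (key : forall (f g : X -> Y), is_Vfunctor f -> is_Vfunctor g ->
              (forall z : M, f (m z) = g (m z)) -> qle qk (vhom (f x) (g x))).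
    { clear f g Hf Hg Hfg. intros f g Hf Hg Hfg.
      eapply qle_trans; [apply (vhom_refl _ x)|]. rewrite HL.
      apply qsup_least. intros s [z ->].
      eapply qle_trans; [|apply (vhom_trans _ (f x) (f (m z)) (g x))].
      apply ten_mono; [apply Hf|]. rewrite Hfg. apply Hg. }
    split; [apply key| apply key]; auto.
  - intros H.
    set (tag := fun x : X => if excluded_middle_informative (exists z, m z = x) then true else false).
    assert (Htag : forall x, tag x = false -> forall z, m z <> x).
    { intros x. unfold tag. destruct excluded_middle_informative as [e|n]; [discriminate|].
      intros _ z E. apply n. eauto. }
    assert (Htag' : forall z, tag (m z) = true).
    { intro z. unfold tag. destruct excluded_middle_informative as [e|n]; [auto|].
      exfalso; apply n; eauto. }
    set (f := fun x : X => ((x, true) : YCat m)).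
    set (g := fun x : X => ((x, tag x) : YCat m)).
    assert (Hinimg : forall x, tag x = true -> exists z, m z = x).
    { intros x. unfold tag. destruct excluded_middle_informative as [e|n]; [auto|discriminate]. }
    assert (Hf : is_Vfunctor f).
    { intros x y. simpl. unfold bY. simpl. apply qle_refl. }
    assert (Hg : is_Vfunctor g).
    { intros x y. simpl. unfold bY. simpl.
      destruct (tag x) eqn:Ex, (tag y) eqn:Ey; simpl; try apply qle_refl.
      + destruct (Hinimg x Ex) as [z0 <-].
        eapply qle_trans; [|apply (dd_ub m (m z0) y z0)].
        rewrite <- (qten_k _ (vhom (m z0) y)) at 1. apply ten_mono_l, vhom_refl.
      + destruct (Hinimg y Ey) as [z0 <-].
        eapply qle_trans; [|apply (dd_ub m x (m z0) z0)].
        rewrite <- (qten_k _ (vhom x (m z0))) at 1. rewrite qten_comm.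
        apply ten_mono_r, vhom_refl. }
    assert (Hfg : forall z, f (m z) = g (m z)).
    { intro z. unfold f, g. now rewrite Htag'. }
    specialize (H (YCat m) f g Hf Hg Hfg).
    assert (Hk : forall x, qle qk (dd m x x)).
    { intro x. destruct (H x) as [H1 _]. simpl in H1. unfold bY in H1. simpl in H1.
      destruct (tag x) eqn:Ex; [|exact H1].
      destruct (Hinimg x Ex) as [z0 <-].
      eapply qle_trans; [|apply (dd_ub m (m z0) (m z0) z0)].
      rewrite <- (qten_k _ qk) at 1. apply ten_mono; apply vhom_refl. }
    intros x x'. fold (dd m x x'). apply qle_antisym; [|apply dd_le_a].
    rewrite <- (qten_k _ (vhom x x')) at 1.
    eapply qle_trans; [apply ten_mono_l, (Hk x)|]. apply da_le.
Qed.
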